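(* A geodesic metric space $(X,d)$ is a quasi-tree if and only if there exists $A\geqslant 0$ such that for every $n\geqslant 2$ and all points $x_0,x_1,\ldots,x_n\in X$, \[(x_1,x_n)_{x_0}\geqslant\min_{1\leqslant i\leqslant n-1}(x_i,x_{i+1})_{x_0}-A.\]
   Context: The Gromov product is $(x,y)_{x_0}=\frac12\big(d(x_0,x)+d(x_0,y)-d(x,y)\big)$. A quasi-tree is a geodesic metric space that is quasi-isometric to a simplicial tree (a 1-dimensional simplicial complex which is an $\mathbb{R}$-tree for the path metric with edges of length 1), where a quasi-isometry is a map $f$ with $\frac1L d(x,y)-C\leqslant d(f(x),f(y))\leqslant Ld(x,y)+C$ for some $L\geqslant1,C\geqslant0$ and with image $C$-dense in the target. *)

(* Defs.v *)
From Stdlib Require Import Reals Lra List ClassicalEpsilon.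
Import ListNotations.
Open Scope R_scope.

Definition is_metric {X : Type} (d : X -> X -> R) : Prop :=
  (forall x y, d x y = 0 <-> x = y) /\
  (forall x y, d x y = d y x) /\
  (forall x y z, d x z <= d x y + d y z).

Definition geodesic {X : Type} (d : X -> X -> R) : Prop :=
  forall x y : X, exists g : R -> X,
    g 0 = x /\ g (d x y) = y /\
    forall s t, 0 <= s <= d x y -> 0 <= t <= d x y ->
      d (g s) (g t) = Rabs (s - t).

Definition gromov {X : Type} (d : X -> X -> R) (x0 x y : X) : R :=
  (d x0 x + d x0 y - d x y) / 2.

Definition quasi_isometry {X Y : Type} (d : X -> X -> R) (e : Y -> Y -> R)
  (f : X -> Y) (L C : R) : Prop :=
  1 <= L /\ 0 <= C /\
  (forall x y, d x y / L - C <= e (f x) (f y) <= L * d x y + C) /\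
  (forall y : Y, exists x : X, e (f x) y <= C).

Definition quasi_isometric {X Y : Type} (d : X -> X -> R) (e : Y -> Y -> R) : Prop :=
  exists f L C, quasi_isometry d e f L C.

Inductive walk {V : Type} (adj : V -> V -> Prop) : nat -> V -> V -> Prop :=
| walk0 : forall v, walk adj 0 v v
| walkS : forall n u w v, adj u w -> walk adj n w v -> walk adj (S n) u v.

Definition has_cycle {V : Type} (adj : V -> V -> Prop) : Prop :=
  exists (l : list V) (v0 : V), (3 <= length l)%nat /\ NoDup l /\
    (forall i, (S i < length l)%nat -> adj (nth i l v0) (nth (S i) l v0)) /\
    adj (last l v0) (hd v0 l).

Definition is_tree {V : Type} (adj : V -> V -> Prop) : Prop :=
  (forall u v, adj u v -> adj v u) /\
  (forall u, ~ adj u u) /\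
  (forall u v, exists n, walk adj n u v) /\
  ~ has_cycle adj.

Definition gdist {V : Type} (adj : V -> V -> Prop) (u v : V) : nat :=
  epsilon (inhabits 0%nat)
    (fun n => walk adj n u v /\ forall m, walk adj m u v -> (n <= m)%nat).

(* Points of the geometric realization: a vertex, or an interior point of an
   edge u--v at distance t in (0,1) from u (REdge u v t = REdge v u (1-t)
   geometrically). *)
Inductive rpt (V : Type) : Type :=
| RVert : V -> rpt V
| REdge : V -> V -> R -> rpt V.
Arguments RVert {V}.
Arguments REdge {V}.

Definition rvalid {V : Type} (adj : V -> V -> Prop) (p : rpt V) : Prop :=
  match p with
  | RVert _ => True
  | REdge u v t => adj u v /\ 0 < t < 1
  end.

Definition rpoint {V : Type} (adj : V -> V -> Prop) : Type :=
  { p : rpt V | rvalid adj p }.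

Definition rends {V : Type} (p : rpt V) : list (V * R) :=
  match p with
  | RVert v => [(v, 0)]
  | REdge u v t => [(u, t); (v, 1 - t)]
  end.

Definition Rmin_list (l : list R) : R :=
  match l with
  | [] => 0
  | h :: tl => fold_right Rmin h tl
  end.

(* Path metric of the realization with edges of length 1. *)
Definition rdist0 {V : Type} (adj : V -> V -> Prop) (p q : rpt V) : R :=
  let via := Rmin_list
    (flat_map (fun a => map (fun b => snd a + INR (gdist adj (fst a) (fst b)) + snd b)
                            (rends q)) (rends p)) in
  match p, q with
  | REdge u v t, REdge u' v' t' =>
      if excluded_middle_informative (u = u' /\ v = v') then Rmin via (Rabs (t - t'))
      else if excluded_middle_informative (u = v' /\ v = u')
           then Rmin via (Rabs (t - (1 - t')))
      else via
  | _, _ => via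
  end.

Definition rdist {V : Type} (adj : V -> V -> Prop) (p q : rpoint adj) : R :=
  rdist0 adj (proj1_sig p) (proj1_sig q).

Definition quasi_tree {X : Type} (d : X -> X -> R) : Prop :=
  exists (V : Type) (adj : V -> V -> Prop), is_tree adj /\ quasi_isometric d (rdist adj).

(* minfrom1 f k = min_{1 <= i <= k+1} f i *)
Fixpoint minfrom1 (f : nat -> R) (k : nat) : R :=
  match k with
  | O => f 1%nat
  | S k' => Rmin (minfrom1 f k') (f (S (S k')))
  end.

(* Main.v *)
Require Import Defs.
From Stdlib Require Import Reals Lra Lia List ClassicalEpsilon ProofIrrelevance FunctionalExtensionality PropExtensionality Classical Arith.
Import ListNotations.
Open Scope R_scope.

Section Graph.
Variable V : Type.
Variable adj : V -> V -> Prop.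

Lemma walk_app : forall n u v, walk adj n u v -> forall m w, walk adj m v w -> walk adj (n+m) u w.
Proof. induction 1; intros; simpl; auto. econstructor; eauto. Qed.

Lemma walk_last : forall n u v w, walk adj n u v -> adj v w -> walk adj (S n) u w.
Proof. intros. replace (S n) with (n+1)%nat by lia. eapply walk_app; eauto.
  econstructor; eauto. constructor. Qed.

Lemma walk_rev : (forall u v, adj u v -> adj v u) ->
  forall n u v, walk adj n u v -> walk adj n v u.
Proof. intros Hs. induction 1. constructor. eapply walk_last; eauto. Qed.

Lemma walk_fn : forall n u v, walk adj n u v ->
  exists f : nat -> V, f 0%nat = u /\ f n = v /\ forall i, (i < n)%nat -> adj (f i) (f (S i)).
Proof.
  induction 1.
  - exists (fun _ => v). split; auto. split; auto. intros; lia.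
  - destruct IHwalk as [f [Hf0 [Hf1 Hf2]]].
    exists (fun i => match i with O => u | S j => f j end). split; auto. split; auto.
    intros [|i] Hi. subst; auto. apply Hf2; lia.
Qed.

Lemma fn_walk : forall (f : nat -> V) n, (forall i, (i < n)%nat -> adj (f i) (f (S i))) ->
  forall k, (k <= n)%nat -> walk adj (n - k) (f k) (f n).
Proof.
  intros f n H.
  assert (G: forall j k, (n - k = j)%nat -> (k <= n)%nat -> walk adj (n - k) (f k) (f n)).
  { induction j; intros k Hj Hk.
    - assert (k = n) by lia. subst. rewrite Nat.sub_diag. constructor.
    - replace (n - k)%nat with (S (n - S k)) by lia. econstructor. apply H; lia. apply IHj; lia. }
  intros; eauto.
Qed.

Lemma fn_walk0 : forall (f : nat -> V) n, (forall i, (i < n)%nat -> adj (f i) (f (S i))) ->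
  walk adj n (f 0%nat) (f n).
Proof. intros. pose proof (fn_walk f n H 0 ltac:(lia)). rewrite Nat.sub_0_r in H0. auto. Qed.

Lemma min_exists : forall P : nat -> Prop, (exists n, P n) -> exists n, P n /\ forall m, P m -> (n <= m)%nat.
Proof.
  intros P [n Hn]. revert Hn. induction n as [n IH] using (well_founded_induction Wf_nat.lt_wf). intros Hn.
  destruct (classic (exists m, (m < n)%nat /\ P m)) as [[m [Hm1 Hm2]]|Hno].
  - eauto.
  - exists n. split; auto. intros m Hm. destruct (le_lt_dec n m); auto. exfalso; eauto.
Qed.

Lemma gdist_spec : forall u v, (exists n, walk adj n u v) ->
  walk adj (gdist adj u v) u v /\ forall m, walk adj m u v -> (gdist adj u v <= m)%nat.
Proof.
  intros u v H. unfold gdist. apply (epsilon_spec (inhabits 0%nat) (fun n => walk adj n u v /\ forall m, walk adj m u v -> (n <= m)%nat)).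
  apply min_exists; auto.
Qed.

Lemma walk0_eq : forall u v, walk adj 0 u v -> u = v.
Proof. intros. inversion H; auto. Qed.

End Graph.
Section Tree.
Variable V : Type.
Variable adj : V -> V -> Prop.
Hypothesis Ht : is_tree adj.

Definition D := gdist adj.

Lemma adj_sym : forall u v, adj u v -> adj v u.
Proof. destruct Ht as [H _]. auto. Qed.
Lemma adj_irr : forall u, ~ adj u u.
Proof. destruct Ht as [_ [H _]]. auto. Qed.
Lemma conn : forall u v, exists n, walk adj n u v.
Proof. destruct Ht as [_ [_ [H _]]]. auto. Qed.
Lemma nocyc : ~ has_cycle adj.
Proof. destruct Ht as [_ [_ [_ H]]]. auto. Qed.

Lemma Dwalk : forall u v, walk adj (D u v) u v.
Proof. intros. apply gdist_spec. apply conn. Qed.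
Lemma Dmin : forall u v m, walk adj m u v -> (D u v <= m)%nat.
Proof. intros. apply (gdist_spec V adj u v (conn u v)); auto. Qed.
Lemma D_refl : forall u, D u u = 0%nat.
Proof. intros. pose proof (Dmin u u 0 (walk0 _ u)). lia. Qed.
Lemma D_zero : forall u v, D u v = 0%nat -> u = v.
Proof. intros. pose proof (Dwalk u v). rewrite H in H0. apply walk0_eq in H0; auto. Qed.
Lemma D_sym : forall u v, D u v = D v u.
Proof. intros. pose proof (Dmin v u _ (walk_rev V adj adj_sym _ _ _ (Dwalk u v))).
  pose proof (Dmin u v _ (walk_rev V adj adj_sym _ _ _ (Dwalk v u))). lia. Qed.
Lemma D_tri : forall u v w, (D u w <= D u v + D v w)%nat.
Proof. intros. apply Dmin. eapply walk_app; apply Dwalk. Qed.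
Lemma D_adj : forall u v, adj u v -> D u v = 1%nat.
Proof. intros. assert (walk adj 1 u v) by (econstructor; eauto; constructor).
  apply Dmin in H0. destruct (D u v) eqn:E; try lia. apply D_zero in E. subst. exfalso; eapply adj_irr; eauto. Qed.

Lemma geod : forall w v, exists a : nat -> V, a 0%nat = w /\ a (D w v) = v /\
  (forall i, (i < D w v)%nat -> adj (a i) (a (S i))) /\ (forall i, (i <= D w v)%nat -> D w (a i) = i).
Proof.
  intros. destruct (walk_fn V adj _ _ _ (Dwalk w v)) as [a [H0 [H1 H2]]].
  exists a. split; auto. split; auto. split; auto. intros i Hi.
  pose proof (fn_walk V adj a _ H2 0 ltac:(lia)) as W0.
  rewrite Nat.sub_0_r in W0.
  assert (W1 : walk adj i (a 0%nat) (a i)).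
  { assert (forall j, (j < i)%nat -> adj (a j) (a (S j))) by (intros; apply H2; lia).
    apply fn_walk0; auto. }
  pose proof (fn_walk V adj a _ H2 i Hi) as W2.
  rewrite H0 in W1. rewrite H1 in W2.
  pose proof (Dmin _ _ _ W1).
  pose proof (Dmin _ _ _ (walk_app V adj _ _ _ (Dwalk w (a i)) _ _ W2)). lia.
Qed.

Lemma last_nth : forall (l : list V) d, l <> [] -> last l d = nth (length l - 1) l d.
Proof.
  induction l; intros. congruence. destruct l as [|b l]. simpl. auto.
  change (last (a :: b :: l) d) with (last (b :: l) d).
  rewrite IHl by congruence. simpl length. rewrite !Nat.sub_succ, !Nat.sub_0_r. reflexivity.
Qed.

Lemma cycle_fn : forall (c : nat -> V) N, (3 <= N)%nat ->
  (forall i j, (i < N)%nat -> (j < N)%nat -> c i = c j -> i = j) ->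
  (forall i, (S i < N)%nat -> adj (c i) (c (S i))) -> adj (c (N-1)%nat) (c 0%nat) -> False.
Proof.
  intros c N HN Hinj Hadj Hlast. apply nocyc.
  exists (map c (seq 0 N)), (c 0%nat).
  assert (Hn : forall i, (i < N)%nat -> nth i (map c (seq 0 N)) (c 0%nat) = c i).
  { intros. rewrite map_nth. rewrite seq_nth; auto. }
  rewrite length_map, length_seq. split; auto. split.
  - apply (NoDup_nth _ (c 0%nat)). intros i j Hi Hj. rewrite length_map, length_seq in *. rewrite !Hn by auto. apply Hinj; auto.
  - split. intros. rewrite !Hn by lia. auto.
    rewrite last_nth. rewrite length_map, length_seq. rewrite Hn by lia.
    destruct N. lia. simpl. auto.
    destruct N. lia. simpl. congruence.
Qed.
Section Cyc.
Variable w : V.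
Variables (a b : nat -> V) (k : nat).
Hypotheses (Ha0 : a 0%nat = w) (Hb0 : b 0%nat = w)
  (Haa : forall i, (i < k)%nat -> adj (a i) (a (S i)))
  (Hba : forall i, (i < k)%nat -> adj (b i) (b (S i)))
  (Had : forall i, (i <= k)%nat -> D w (a i) = i)
  (Hbd : forall i, (i <= k)%nat -> D w (b i) = i)
  (Hne : a k <> b k).

Fixpoint lsearch (j : nat) : nat :=
  match j with
  | O => O
  | S j' => if excluded_middle_informative (a (S j') = b (S j')) then S j' else lsearch j'
  end.

Lemma lsearch_spec : forall j, (lsearch j <= j)%nat /\ a (lsearch j) = b (lsearch j) /\
  forall i, (lsearch j < i <= j)%nat -> a i <> b i.
Proof.
  induction j; simpl.
  - split; auto. split. congruence. intros; lia.
  - destruct (excluded_middle_informative (a (S j) = b (S j))).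
    + split; auto. split; auto. intros; lia.
    + destruct IHj as [H1 [H2 H3]]. split; [lia|]. split; auto.
      intros i Hi. destruct (Nat.eq_dec i (S j)). subst; auto. apply H3; lia.
Qed.

Lemma cycA : adj (a k) (b k) -> False.
Proof.
  intros Hab. destruct (lsearch_spec k) as [H1 [H2 H3]]. set (i0 := lsearch k) in *.
  assert (Hi0 : (i0 < k)%nat). { destruct (Nat.eq_dec i0 k); [|lia]. rewrite e in H2. congruence. }
  set (m := (k - i0)%nat).
  set (c := fun j => if (j <=? m)%nat then a (i0 + j)%nat else b (i0 + (2*m+1) - j)%nat).
  apply (cycle_fn c (2*m+1)).
  - lia.
  - intros i j Hi Hj Hc. unfold c in Hc.
    destruct (Nat.leb_spec i m); destruct (Nat.leb_spec j m); try lia;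
    match type of Hc with ?x = ?y => assert (Hd : D w x = D w y) by congruence end;
    repeat first [rewrite Had in Hd by lia | rewrite Hbd in Hd by lia]; try lia.
    + exfalso. apply (H3 (i0+i)%nat). lia. rewrite Hc. f_equal. lia.
    + exfalso. apply (H3 (i0+j)%nat). lia. rewrite <- Hc. f_equal. lia.
  - intros i Hi. unfold c. destruct (Nat.leb_spec i m); destruct (Nat.leb_spec (S i) m).
    + replace (i0 + S i)%nat with (S (i0 + i)) by lia. apply Haa; lia.
    + assert (i = m) by lia. subst i. replace (i0 + m)%nat with k by lia.
      replace (i0 + (2*m+1) - S m)%nat with k by lia. auto.
    + lia.
    + replace (i0 + (2*m+1) - i)%nat with (S (i0 + (2*m+1) - S i)) by lia. apply adj_sym, Hba. lia.
  - unfold c. destruct (Nat.leb_spec (2*m+1-1) m). lia. destruct (Nat.leb_spec 0 m); [|lia].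
    replace (i0 + (2*m+1) - (2*m+1-1))%nat with (S i0) by lia. rewrite Nat.add_0_r, H2.
    apply adj_sym, Hba. lia.
Qed.

Lemma cycB : forall v, D w v = S k -> adj (a k) v -> adj v (b k) -> False.
Proof.
  intros v Hv Hav Hvb. destruct (lsearch_spec k) as [H1 [H2 H3]]. set (i0 := lsearch k) in *.
  assert (Hi0 : (i0 < k)%nat). { destruct (Nat.eq_dec i0 k); [|lia]. rewrite e in H2. congruence. }
  set (m := (k - i0)%nat).
  set (c := fun j => if (j <=? m)%nat then a (i0 + j)%nat else if (j =? S m)%nat then v else b (i0 + (2*m+2) - j)%nat).
  apply (cycle_fn c (2*m+2)).
  - lia.
  - intros i j Hi Hj Hc. unfold c in Hc.
    destruct (Nat.leb_spec i m); destruct (Nat.leb_spec j m); destruct (Nat.eqb_spec i (S m)); destruct (Nat.eqb_spec j (S m)); try lia;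
    match type of Hc with ?x = ?y => assert (Hd : D w x = D w y) by congruence end;
    repeat first [rewrite Had in Hd by lia | rewrite Hbd in Hd by lia | rewrite Hv in Hd]; try lia.
    + exfalso. apply (H3 (i0+i)%nat). lia. rewrite Hc. f_equal. lia.
    + exfalso. apply (H3 (i0+j)%nat). lia. rewrite <- Hc. f_equal. lia.
  - intros i Hi. unfold c. destruct (Nat.leb_spec i m); destruct (Nat.leb_spec (S i) m);
      destruct (Nat.eqb_spec i (S m)); destruct (Nat.eqb_spec (S i) (S m)); try lia.
    + replace (i0 + S i)%nat with (S (i0 + i)) by lia. apply Haa; lia.
    + assert (i = m) by lia. subst i. replace (i0 + m)%nat with k by lia. auto.
    + subst i. replace (i0 + (2*m+2) - S (S m))%nat with k by lia. auto.
    + replace (i0 + (2*m+2) - i)%nat with (S (i0 + (2*m+2) - S i)) by lia. apply adj_sym, Hba. lia.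
  - unfold c. destruct (Nat.leb_spec (2*m+2-1) m). lia. destruct (Nat.eqb_spec (2*m+2-1) (S m)). lia.
    destruct (Nat.leb_spec 0 m); [|lia].
    replace (i0 + (2*m+2) - (2*m+2-1))%nat with (S i0) by lia. rewrite Nat.add_0_r, H2.
    apply adj_sym, Hba. lia.
Qed.
End Cyc.
Section Root.
Variable w : V.
Definition dep v := D w v.

Lemma adj_dep_le : forall u v, adj u v -> (dep v <= S (dep u))%nat.
Proof. intros. unfold dep. pose proof (D_tri w u v). rewrite (D_adj u v H) in H0. lia. Qed.

Lemma adj_dep_ne : forall u v, adj u v -> dep u <> dep v.
Proof.
  intros u v Huv E. unfold dep in E.
  destruct (geod w u) as [a [Ha0 [Hak [Haa Had]]]].
  destruct (geod w v) as [b [Hb0 [Hbk [Hba Hbd]]]].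
  rewrite <- E in Hbk, Hba, Hbd.
  apply (cycA w a b (D w u) Ha0 Hb0 Haa Hba Had Hbd).
  rewrite Hak, Hbk. intro Heq; rewrite Heq in Huv; exact (adj_irr v Huv).
  rewrite Hak, Hbk; auto.
Qed.

Lemma uniq_par : forall p1 p2 v, adj p1 v -> adj p2 v -> S (dep p1) = dep v -> S (dep p2) = dep v -> p1 = p2.
Proof.
  intros p1 p2 v H1 H2 E1 E2. apply NNPP. intro Hne. unfold dep in *.
  destruct (geod w p1) as [a [Ha0 [Hak [Haa Had]]]].
  destruct (geod w p2) as [b [Hb0 [Hbk [Hba Hbd]]]].
  assert (E : D w p2 = D w p1) by lia. rewrite E in Hbk, Hba, Hbd.
  apply (cycB w a b (D w p1) Ha0 Hb0 Haa Hba Had Hbd) with v.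
  rewrite Hak, Hbk; auto. auto. rewrite Hak; auto. rewrite Hbk; apply adj_sym; auto.
Qed.

Definition par v := epsilon (inhabits v) (fun p => adj v p /\ S (dep p) = dep v).

Lemma par_spec : forall v, (1 <= dep v)%nat -> adj v (par v) /\ S (dep (par v)) = dep v.
Proof.
  intros v Hv. unfold par. apply (epsilon_spec (inhabits v) (fun p => adj v p /\ S (dep p) = dep v)).
  destruct (geod w v) as [a [Ha0 [Hak [Haa Had]]]]. unfold dep in *.
  exists (a (D w v - 1)%nat). split.
  - apply adj_sym. pattern v at 2. rewrite <- Hak. replace (D w v) with (S (D w v - 1)) at 2 by lia. apply Haa. lia.
  - rewrite Had by lia. lia.
Qed.

Lemma par_unique : forall v p, adj v p -> S (dep p) = dep v -> p = par v.
Proof.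
  intros. destruct (par_spec v ltac:(lia)). apply (uniq_par p (par v) v); auto using adj_sym.
Qed.

Definition anc j v := Nat.iter (dep v - j) par v.

Lemma iter_dep : forall n v, (n <= dep v)%nat -> dep (Nat.iter n par v) = (dep v - n)%nat.
Proof.
  induction n; intros. simpl. lia. rewrite Nat.iter_succ.
  destruct (par_spec (Nat.iter n par v)) as [_ E]. rewrite IHn; lia. rewrite IHn in E; lia.
Qed.

Lemma anc_dep : forall j v, (j <= dep v)%nat -> dep (anc j v) = j.
Proof. intros. unfold anc. rewrite iter_dep; lia. Qed.

Lemma anc_self : forall v, anc (dep v) v = v.
Proof. intros. unfold anc. rewrite Nat.sub_diag. reflexivity. Qed.

Lemma anc_comp : forall i j x, (i <= j)%nat -> (j <= dep x)%nat -> anc i (anc j x) = anc i x.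
Proof.
  intros. unfold anc at 1. rewrite anc_dep by auto. unfold anc.
  rewrite <- Nat.iter_add. f_equal. lia.
Qed.

Lemma anc0 : forall x, anc 0 x = w.
Proof. intros. assert (dep (anc 0 x) = 0%nat) by (apply anc_dep; lia). symmetry. apply D_zero. auto. Qed.

Lemma D_anc : forall j x, (j <= dep x)%nat -> (D x (anc j x) <= dep x - j)%nat.
Proof.
  intros. unfold anc. generalize (dep x - j)%nat (Nat.le_sub_l (dep x) j). clear j H.
  induction n; intros. simpl. rewrite D_refl. lia.
  rewrite Nat.iter_succ. pose proof (D_tri x (Nat.iter n par x) (par (Nat.iter n par x))).
  destruct (par_spec (Nat.iter n par x)) as [Ha _]. rewrite iter_dep; lia.
  rewrite (D_adj _ _ Ha) in H0. specialize (IHn ltac:(lia)). lia.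
Qed.

Lemma anc_par : forall j v, (1 <= dep v)%nat -> (j <= dep v - 1)%nat -> anc j (par v) = anc j v.
Proof.
  intros. destruct (par_spec v H) as [_ E]. unfold anc. rewrite <- Nat.iter_succ_r.
  f_equal. lia.
Qed.

Fixpoint hs (a b : V) (n : nat) : nat :=
  match n with
  | O => O
  | S n' => if excluded_middle_informative (anc (S n') a = anc (S n') b) then S n' else hs a b n'
  end.

Definition h a b := hs a b (Nat.min (dep a) (dep b)).

Lemma hs_spec : forall a b n, (hs a b n <= n)%nat /\ anc (hs a b n) a = anc (hs a b n) b /\
  forall j, (hs a b n < j <= n)%nat -> anc j a <> anc j b.
Proof.
  induction n; simpl.
  - split; auto. split. rewrite !anc0; auto. intros; lia.
  - destruct (excluded_middle_informative (anc (S n) a = anc (S n) b)).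
    + split; auto. split; auto. intros; lia.
    + destruct IHn as [H1 [H2 H3]]. split; [lia|]. split; auto.
      intros j Hj. destruct (Nat.eq_dec j (S n)). subst; auto. apply H3; lia.
Qed.

Lemma h_le : forall a b, (h a b <= dep a)%nat /\ (h a b <= dep b)%nat.
Proof. intros. unfold h. destruct (hs_spec a b (Nat.min (dep a) (dep b))) as [H _]. lia. Qed.
Lemma h_eq : forall a b, anc (h a b) a = anc (h a b) b.
Proof. intros. unfold h. apply hs_spec. Qed.
Lemma h_max : forall a b j, (j <= dep a)%nat -> (j <= dep b)%nat -> anc j a = anc j b -> (j <= h a b)%nat.
Proof.
  intros. unfold h. destruct (hs_spec a b (Nat.min (dep a) (dep b))) as [_ [_ H3]].
  destruct (le_lt_dec j (hs a b (Nat.min (dep a) (dep b)))); auto. exfalso. apply (H3 j); auto. lia.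
Qed.

Lemma anc_mono : forall a b i j, (i <= j)%nat -> (j <= dep a)%nat -> (j <= dep b)%nat -> anc j a = anc j b -> anc i a = anc i b.
Proof. intros. rewrite <- (anc_comp i j a), <- (anc_comp i j b) by auto. congruence. Qed.

Definition T a b := (dep a + dep b - 2 * h a b)%nat.

Lemma D_upper : forall a b, (D a b <= T a b)%nat.
Proof.
  intros. unfold T. destruct (h_le a b) as [Hl1 Hl2]. pose proof (D_tri a (anc (h a b) a) b).
  pose proof (D_anc (h a b) a ltac:(lia)).
  pose proof (D_anc (h a b) b ltac:(lia)) as T3. rewrite <- h_eq in T3. rewrite D_sym in T3. lia.
Qed.

Lemma PT : forall v b, (1 <= dep v)%nat -> (T v b <= S (T (par v) b))%nat /\ (T (par v) b <= S (T v b))%nat.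
Proof.
  intros v b Hv. destruct (par_spec v Hv) as [_ E]. unfold T.
  pose proof (h_le v b). pose proof (h_le (par v) b).
  assert (A1 : forall j, (j <= dep (par v))%nat -> anc j (par v) = anc j v) by (intros; apply anc_par; lia).
  destruct (Nat.eq_dec (h v b) (dep v)) as [Eq|Ne].
  - assert (h (par v) b = dep (par v)).
    { apply Nat.le_antisymm. lia. apply h_max; try lia. rewrite A1 by lia.
      apply (anc_mono v b _ (h v b)); try lia. apply h_eq. }
    lia.
  - assert (h (par v) b = h v b).
    { apply Nat.le_antisymm.
      + apply h_max; try lia. rewrite <- A1 by lia. apply h_eq.
      + apply h_max; try lia. rewrite A1 by lia. apply h_eq. }
    lia.
Qed.

Lemma T_refl : forall b, T b b = 0%nat.
Proof. intros. unfold T. pose proof (h_le b b). assert (h b b = dep b). apply Nat.le_antisymm. lia. apply h_max; auto. lia. Qed.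

Lemma D_lower : forall m a b, walk adj m a b -> (T a b <= m)%nat.
Proof.
  induction 1. rewrite T_refl; lia.
  pose proof (adj_dep_le _ _ H). pose proof (adj_dep_le _ _ (adj_sym _ _ H)). pose proof (adj_dep_ne _ _ H).
  destruct (Nat.eq_dec (dep u) (S (dep w0))).
  - assert (w0 = par u) by (apply par_unique; auto). subst w0. pose proof (PT u v ltac:(lia)). lia.
  - assert (dep w0 = S (dep u)) by lia. assert (u = par w0) by (apply par_unique; auto using adj_sym).
    subst u. pose proof (PT w0 v ltac:(lia)). lia.
Qed.

Lemma D_T : forall a b, D a b = T a b.
Proof. intros. apply Nat.le_antisymm. apply D_upper. apply D_lower. apply Dwalk. Qed.

End Root.

Lemma hyp0 : forall w a b c,
  (Nat.min (D w a + D w c - D a c) (D w c + D w b - D c b) <= D w a + D w b - D a b)%nat.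
Proof.
  intros. rewrite (D_T w a c), (D_T w c b), (D_T w a b). unfold T.
  change (D w a) with (dep w a). change (D w b) with (dep w b). change (D w c) with (dep w c).
  pose proof (h_le w a b). pose proof (h_le w a c). pose proof (h_le w c b).
  assert (Nat.min (h w a c) (h w c b) <= h w a b)%nat.
  { apply h_max; try lia. transitivity (anc w (Nat.min (h w a c) (h w c b)) c).
    apply (anc_mono w a c _ (h w a c)); try lia. apply h_eq.
    apply (anc_mono w c b _ (h w c b)); try lia. apply h_eq. }
  lia.
Qed.

Lemma center : forall w a b, exists c, (D w c + D c a = D w a)%nat /\ (D w c + D c b = D w b)%nat /\
  (D c a + D c b = D a b)%nat.
Proof.
  intros. exists (anc w (h w a b) a).
  pose proof (h_le w a b). pose proof (h_eq w a b).
  pose proof (anc_dep w (h w a b) a ltac:(lia)). unfold dep in H1.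
  pose proof (D_anc w (h w a b) a ltac:(lia)).
  pose proof (D_anc w (h w a b) b ltac:(lia)). rewrite <- H0 in H3.
  pose proof (D_tri w (anc w (h w a b) a) a). pose proof (D_tri w (anc w (h w a b) a) b).
  rewrite (D_sym a) in H2. rewrite (D_sym b) in H3. unfold dep in *.
  rewrite (D_T w a b). unfold T, dep. lia.
Qed.
Lemma fold_Rmin_le : forall tl h0 x, In x (h0 :: tl) -> fold_right Rmin h0 tl <= x.
Proof.
  induction tl; intros h0 x Hx; simpl in *.
  - destruct Hx as [<-|[]]. lra.
  - destruct Hx as [<-|[<-|Hx]].
    + eapply Rle_trans. apply Rmin_r. apply IHtl. left; auto.
    + apply Rmin_l.
    + eapply Rle_trans. apply Rmin_r. apply IHtl. right; auto.
Qed.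
Lemma fold_Rmin_ge : forall tl h0 m, (forall x, In x (h0 :: tl) -> m <= x) -> m <= fold_right Rmin h0 tl.
Proof.
  induction tl; intros h0 m H; simpl in *. apply H; auto.
  apply Rmin_glb. apply H; auto. apply IHtl. intros x [<-|Hx]; apply H; auto.
Qed.
Lemma Rmin_list_le : forall l x, In x l -> Rmin_list l <= x.
Proof. intros [|h0 tl] x Hx. destruct Hx. apply fold_Rmin_le; auto. Qed.
Lemma Rmin_list_ge : forall l m, l <> [] -> (forall x, In x l -> m <= x) -> m <= Rmin_list l.
Proof. intros [|h0 tl] m Hn H. congruence. apply fold_Rmin_ge; auto. Qed.

Definition rnd (p : rpt V) : V := match p with RVert v => v | REdge u _ _ => u end.

Lemma rends_prop : forall p, rvalid adj p -> forall a, In a (rends p) -> 0 <= snd a <= 1 /\ (D (rnd p) (fst a) <= 1)%nat.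
Proof.
  intros [v|u v t] Hp a Ha; simpl in *.
  - destruct Ha as [<-|[]]. simpl. rewrite D_refl. split; [lra|lia].
  - destruct Hp as [Hadj Ht']. destruct Ha as [<-|[<-|[]]]; simpl.
    + rewrite D_refl. split; [lra|lia].
    + rewrite (D_adj _ _ Hadj). split; [lra|lia].
Qed.

Lemma rends_first : forall p, rvalid adj p -> exists s, 0 <= s <= 1 /\ In (rnd p, s) (rends p).
Proof.
  intros [v|u v t] Hp; simpl in *. exists 0. split. lra. auto.
  exists t. split. lra. auto.
Qed.

Lemma via_bounds : forall p q, rvalid adj p -> rvalid adj q ->
  let via := Rmin_list (flat_map (fun a => map (fun b => snd a + INR (gdist adj (fst a) (fst b)) + snd b)
                            (rends q)) (rends p)) in
  INR (D (rnd p) (rnd q)) - 2 <= via <= INR (D (rnd p) (rnd q)) + 2.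
Proof.
  intros p q Hp Hq via. split.
  - apply Rmin_list_ge.
    + destruct (rends_first p Hp) as [s [_ Hs]]. destruct (rends_first q Hq) as [s' [_ Hs']].
      intro E. assert (In (s + INR (gdist adj (rnd p) (rnd q)) + s') (flat_map (fun a => map (fun b => snd a + INR (gdist adj (fst a) (fst b)) + snd b)
                            (rends q)) (rends p))).
      { apply in_flat_map. exists (rnd p, s). split; auto. apply in_map_iff. exists (rnd q, s'). auto. }
      rewrite E in H. destruct H.
    + intros x Hx. apply in_flat_map in Hx. destruct Hx as [a [Ha Hx]]. apply in_map_iff in Hx.
      destruct Hx as [b [<- Hb]]. destruct (rends_prop p Hp a Ha). destruct (rends_prop q Hq b Hb).
      pose proof (D_tri (rnd p) (fst a) (rnd q)). pose proof (D_tri (fst a) (fst b) (rnd q)).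
      rewrite (D_sym (fst b)) in H4.
      assert (INR (D (rnd p) (rnd q)) <= INR (gdist adj (fst a) (fst b)) + 2).
      { replace 2 with (INR 2) by (simpl; lra). rewrite <- plus_INR. apply le_INR. unfold D in *. lia. }
      lra.
  - destruct (rends_first p Hp) as [s [Hs1 Hs]]. destruct (rends_first q Hq) as [s' [Hs1' Hs']].
    eapply Rle_trans. apply Rmin_list_le.
    apply in_flat_map. exists (rnd p, s). split; auto. apply in_map_iff. exists (rnd q, s'). split; [reflexivity|auto].
    simpl. unfold D. lra.
Qed.

Lemma rdist_round : forall p q : rpoint adj,
  INR (D (rnd (proj1_sig p)) (rnd (proj1_sig q))) - 2 <= rdist adj p q <= INR (D (rnd (proj1_sig p)) (rnd (proj1_sig q))) + 2.
Proof.
  intros [p Hp] [q Hq]. unfold rdist. simpl.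
  pose proof (via_bounds p q Hp Hq) as VB. simpl in VB.
  destruct p as [v|u v t]; destruct q as [v'|u' v' t']; unfold rdist0; try exact VB.
  destruct (excluded_middle_informative (u = u' /\ v = v')) as [[E1 E2]|N1].
  - subst. simpl in *. rewrite D_refl in *. simpl in *. split.
    + apply Rmin_glb. lra. pose proof (Rabs_pos (t - t')). lra.
    + eapply Rle_trans. apply Rmin_l. lra.
  - destruct (excluded_middle_informative (u = v' /\ v = u')) as [[E1 E2]|N2].
    + subst. simpl in *. destruct Hp as [Hadj _]. rewrite (D_adj _ _ Hadj) in *. simpl in *. split.
      * apply Rmin_glb. lra. pose proof (Rabs_pos (t - (1 - t'))). lra.
      * eapply Rle_trans. apply Rmin_l. lra.
    + exact VB.
Qed.
End Tree.
Section Fwd.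
Variables (X : Type) (d : X -> X -> R).
Hypothesis hmet : is_metric d.
Variables (V : Type) (adj : V -> V -> Prop).
Hypothesis Ht : is_tree adj.
Variable g : X -> V.
Variables L C : R.
Hypothesis HL : 1 <= L.
Hypothesis HC : 0 <= C.
Hypothesis Hup : forall x y, INR (D V adj (g x) (g y)) <= L * d x y + C.
Hypothesis Hlo : forall x y, d x y <= L * INR (D V adj (g x) (g y)) + C.

Definition Dr a b := INR (D V adj a b).
Definition GT w a b := (Dr w a + Dr w b - Dr a b) / 2.

Lemma d_sym : forall x y, d x y = d y x.
Proof. destruct hmet as [_ [H _]]; auto. Qed.
Lemma d_tri : forall x y z, d x z <= d x y + d y z.
Proof. destruct hmet as [_ [_ H]]; auto. Qed.
Lemma d_refl : forall x, d x x = 0.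
Proof. destruct hmet as [H _]. intros; apply H; auto. Qed.
Lemma d_pos : forall x y, 0 <= d x y.
Proof. intros. pose proof (d_tri x y x). rewrite d_refl, (d_sym y x) in H. lra. Qed.

Lemma Dr_sym : forall a b, Dr a b = Dr b a.
Proof. intros. unfold Dr. rewrite (D_sym V adj Ht). auto. Qed.
Lemma Dr_tri : forall a b c, Dr a c <= Dr a b + Dr b c.
Proof. intros. unfold Dr. rewrite <- plus_INR. apply le_INR. apply D_tri; auto. Qed.
Lemma Dr_refl : forall a, Dr a a = 0.
Proof. intros. unfold Dr. rewrite D_refl; auto. Qed.
Lemma Dr_pos : forall a b, 0 <= Dr a b.
Proof. intros; apply pos_INR. Qed.

Lemma GT_hyp : forall w a b c, Rmin (GT w a c) (GT w c b) <= GT w a b.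
Proof.
  intros. pose proof (hyp0 V adj Ht w a b c).
  pose proof (D_tri V adj Ht a w c). pose proof (D_tri V adj Ht c w b). pose proof (D_tri V adj Ht a w b).
  rewrite (D_sym V adj Ht a w) in H0. rewrite (D_sym V adj Ht c w) in H1. rewrite (D_sym V adj Ht a w) in H2.
  unfold GT, Dr.
  destruct (Nat.min_spec (D V adj w a + D V adj w c - D V adj a c) (D V adj w c + D V adj w b - D V adj c b)) as [[E1 E2]|[E1 E2]];
  rewrite E2 in H; apply le_INR in H; rewrite !minus_INR, !plus_INR in H by lia;
  [apply Rle_trans with (GT w a c); [apply Rmin_l|] | apply Rle_trans with (GT w c b); [apply Rmin_r|]];
  unfold GT, Dr; lra.
Qed.

Lemma GT_lb : forall w a b, Dr w a - Dr a b <= GT w a b.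
Proof. intros. unfold GT. pose proof (Dr_tri w b a). rewrite (Dr_sym b a) in H. lra. Qed.

Lemma CL : forall w (z : nat -> V) J m, 0 <= J -> (forall j, (j < m)%nat -> Dr (z j) (z (S j)) <= J) ->
  exists j, (j <= m)%nat /\ Dr w (z j) <= GT w (z 0%nat) (z m) + J.
Proof.
  intros w z J m HJ. induction m; intros Hs.
  - exists 0%nat. split; auto. unfold GT. rewrite Dr_refl. lra.
  - destruct IHm as [j [Hj1 Hj2]]. intros; apply Hs; lia.
    pose proof (GT_hyp w (z 0%nat) (z (S m)) (z m)).
    destruct (Rle_dec (GT w (z 0%nat) (z m)) (GT w (z m) (z (S m)))).
    + rewrite Rmin_left in H by auto. exists j. split. lia. lra.
    + rewrite Rmin_right in H by lra. exists m. split. lia.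
      pose proof (GT_lb w (z m) (z (S m))). pose proof (Hs m ltac:(lia)). lra.
Qed.

Lemma iter_hyp : forall w (z : nat -> V) m, (1 <= m)%nat ->
  exists i, (i < m)%nat /\ GT w (z i) (z (S i)) <= GT w (z 0%nat) (z m).
Proof.
  intros w z m Hm. induction m. lia.
  destruct (Nat.eq_dec m 0). subst. exists 0%nat. split. lia. lra.
  destruct IHm as [i [Hi1 Hi2]]. lia.
  pose proof (GT_hyp w (z 0%nat) (z (S m)) (z m)).
  destruct (Rle_dec (GT w (z 0%nat) (z m)) (GT w (z m) (z (S m)))).
  + rewrite Rmin_left in H by auto. exists i. split. lia. lra.
  + rewrite Rmin_right in H by lra. exists m. split. lia. lra.
Qed.

Definition J := L + C.

Definition isgeod (gm : R -> X) (l : R) := forall s t, 0 <= s <= l -> 0 <= t <= l -> d (gm s) (gm t) = Rabs (s - t).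

Lemma CLg : forall gm l, isgeod gm l -> forall s1 s2 w, 0 <= s1 <= l -> 0 <= s2 <= l ->
  exists t, (s1 <= t <= s2 \/ s2 <= t <= s1) /\ Dr w (g (gm t)) <= GT w (g (gm s1)) (g (gm s2)) + J.
Proof.
  intros gm l Hg s1 s2 w H1 H2.
  destruct (INR_unbounded (Rabs (s2 - s1))) as [n Hn].
  set (N := S n). assert (HN : 0 < INR N) by (apply lt_0_INR; unfold N; lia).
  assert (HN2 : Rabs (s2 - s1) <= INR N) by (unfold N; rewrite S_INR; lra).
  set (tt := fun j : nat => s1 + (s2 - s1) * (INR j / INR N)).
  assert (Hlam : forall j, (j <= N)%nat -> 0 <= INR j / INR N <= 1).
  { intros. split. unfold Rdiv. apply Rmult_le_pos. apply pos_INR. left; apply Rinv_0_lt_compat; auto.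
    apply Rmult_le_reg_r with (INR N); auto. unfold Rdiv. rewrite Rmult_assoc, Rinv_l by lra.
    rewrite Rmult_1_r, Rmult_1_l. apply le_INR; auto. }
  assert (Hin : forall j, (j <= N)%nat -> (s1 <= tt j <= s2 \/ s2 <= tt j <= s1)).
  { intros j Hj. specialize (Hlam j Hj). unfold tt. destruct (Rle_dec s1 s2); [left|right]; split; nra. }
  assert (Hin2 : forall j, (j <= N)%nat -> 0 <= tt j <= l).
  { intros j Hj. destruct (Hin j Hj); lra. }
  destruct (CL w (fun j => g (gm (tt j))) J N) as [j [Hj1 Hj2]].
  - unfold J; lra.
  - intros j Hj. unfold Dr. eapply Rle_trans. apply Hup. rewrite Hg by (apply Hin2; lia).
    assert (Rabs (tt j - tt (S j)) <= 1).
    { unfold tt. rewrite S_INR.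
      replace (s1 + (s2 - s1) * (INR j / INR N) - (s1 + (s2 - s1) * ((INR j + 1) / INR N))) with (- ((s2 - s1) / INR N)) by (field; lra).
      rewrite Rabs_Ropp. unfold Rdiv. rewrite Rabs_mult, Rabs_inv, (Rabs_right (INR N)) by lra.
      apply Rmult_le_reg_r with (INR N); auto. rewrite Rmult_assoc, Rinv_l by lra. lra. }
    unfold J. nra.
  - exists (tt j). split. apply Hin; auto.
    cbv beta in Hj2.
    assert (E0 : tt 0%nat = s1) by (unfold tt; rewrite INR_0; unfold Rdiv; ring).
    assert (EN : tt N = s2) by (unfold tt; field; lra).
    rewrite E0, EN in Hj2. auto.
Qed.
Definition Kc := L * (2 * L * J + C) + C + J.
Definition Dl := L * (Kc + J) + C.

Lemma Dr_eq : forall a b c, (D V adj a b + D V adj b c = D V adj a c)%nat -> Dr a b + Dr b c = Dr a c.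
Proof. intros. unfold Dr. rewrite <- plus_INR. f_equal; auto. Qed.

Lemma Morse : forall gm l, isgeod gm l -> forall s, 0 <= s <= l ->
  GT (g (gm s)) (g (gm 0)) (g (gm l)) <= Kc.
Proof.
  intros gm l Hg s Hs.
  set (w := g (gm s)). set (A' := g (gm 0)). set (B' := g (gm l)).
  destruct (center V adj Ht w A' B') as [c [E1 [E2 E3]]].
  apply Dr_eq in E1. apply Dr_eq in E2. assert (E3' : Dr c A' + Dr c B' = Dr A' B').
  { unfold Dr. rewrite <- plus_INR. f_equal; auto. }
  destruct (CLg gm l Hg s 0 c ltac:(lra) ltac:(lra)) as [t1 [Ht1 Hd1]].
  destruct (CLg gm l Hg s l c ltac:(lra) ltac:(lra)) as [t2 [Ht2 Hd2]].
  fold w A' B' in Hd1, Hd2.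
  assert (G1 : GT c w A' = 0) by (unfold GT; rewrite (Dr_sym c w); lra).
  assert (G2 : GT c w B' = 0) by (unfold GT; rewrite (Dr_sym c w); lra).
  rewrite G1 in Hd1. rewrite G2 in Hd2.
  assert (T1 : 0 <= t1 <= s) by lra. assert (T2 : s <= t2 <= l) by lra.
  assert (Dr (g (gm t1)) (g (gm t2)) <= 2 * J).
  { pose proof (Dr_tri (g (gm t1)) c (g (gm t2))). rewrite (Dr_sym _ c) in H. lra. }
  assert (d (gm t1) (gm t2) <= L * (2 * J) + C).
  { eapply Rle_trans. apply Hlo. fold (Dr (g (gm t1)) (g (gm t2))).
    apply Rplus_le_compat_r. apply Rmult_le_compat_l; lra. }
  rewrite Hg in H0 by lra. rewrite Rabs_left1 in H0 by lra.
  assert (Dr w c <= L * (s - t1) + C + J).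
  { pose proof (Dr_tri w (g (gm t1)) c). rewrite (Dr_sym (g (gm t1)) c) in H1.
    assert (Dr w (g (gm t1)) <= L * (s - t1) + C).
    { unfold w, Dr. eapply Rle_trans. apply Hup. rewrite Hg by lra. rewrite Rabs_right by lra. lra. }
    lra. }
  assert (L * (s - t1) <= L * (2 * L * J + C)) by (apply Rmult_le_compat_l; lra).
  unfold GT, Kc. lra.
Qed.

Hypothesis hgeo : geodesic d.

Lemma Gl : forall gm l, isgeod gm l -> forall s, 0 <= s <= l -> forall (y : nat -> X) m, (1 <= m)%nat ->
  y 0%nat = gm 0 -> y m = gm l ->
  exists i q, (i < m)%nat /\ d (y i) q + d q (y (S i)) = d (y i) (y (S i)) /\ d (gm s) q <= Dl.
Proof.
  intros gm l Hg s Hs y m Hm Hy0 Hym.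
  set (w := g (gm s)).
  destruct (iter_hyp w (fun i => g (y i)) m Hm) as [i [Hi1 Hi2]]. cbv beta in Hi2.
  rewrite Hy0, Hym in Hi2. pose proof (Morse gm l Hg s Hs). fold w in H.
  destruct (hgeo (y i) (y (S i))) as [gm' [G0 [G1 G2]]].
  assert (Hl' : 0 <= d (y i) (y (S i))) by apply d_pos.
  destruct (CLg gm' _ G2 0 (d (y i) (y (S i))) w ltac:(lra) ltac:(lra)) as [t [Ht1 Ht2]].
  rewrite G0, G1 in Ht2.
  assert (Tt : 0 <= t <= d (y i) (y (S i))) by lra.
  exists i, (gm' t). split; auto. split.
  - set (l' := d (y i) (y (S i))) in *.
    assert (E1 : d (gm' 0) (gm' t) = t) by (rewrite G2 by lra; rewrite Rabs_left1 by lra; lra).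
    assert (E2 : d (gm' t) (gm' l') = l' - t) by (rewrite G2 by lra; rewrite Rabs_left1 by lra; lra).
    rewrite G0 in E1. rewrite G1 in E2. lra.
  - eapply Rle_trans. apply Hlo. fold w. fold (Dr w (g (gm' t))).
    unfold Dl. apply Rplus_le_compat_r. apply Rmult_le_compat_l; lra.
Qed.

Lemma minfrom1_le : forall f k j, (1 <= j <= S k)%nat -> minfrom1 f k <= f j.
Proof.
  induction k; intros j Hj; simpl.
  - assert (j = 1%nat) by lia. subst. lra.
  - destruct (Nat.eq_dec j (S (S k))). subst. apply Rmin_r.
    eapply Rle_trans. apply Rmin_l. apply IHk. lia.
Qed.

Lemma gromov_seg : forall o a b q, d a q + d q b = d a b -> gromov d o a b <= d o q.
Proof.
  intros. unfold gromov. pose proof (d_tri o q a). pose proof (d_tri o q b).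
  rewrite (d_sym q a) in H0. lra.
Qed.

Lemma Dl_pos : 0 <= Dl.
Proof. unfold Dl, Kc, J. assert (0 <= L * (2 * L * (L + C) + C)) by (apply Rmult_le_pos; nra).
  assert (0 <= L * (L * (2 * L * (L + C) + C) + C + (L + C) + (L + C))) by (apply Rmult_le_pos; nra). lra. Qed.

Lemma fwd_main : forall (n : nat) (x : nat -> X), (2 <= n)%nat ->
  gromov d (x 0%nat) (x 1%nat) (x n) >=
  minfrom1 (fun i => gromov d (x 0%nat) (x i) (x (S i))) (n - 2) - 3 * Dl.
Proof.
  intros n x Hn. set (o := x 0%nat). set (a := x 1%nat). set (b := x n).
  destruct (hgeo a b) as [gm [G0 [G1 G2]]]. set (l := d a b) in *.
  set (s := (d a b + d a o - d b o) / 2).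
  pose proof (d_tri a o b). pose proof (d_tri b a o). pose proof (d_tri a b o).
  rewrite (d_sym b a) in H0. rewrite (d_sym o b) in H.
  assert (Hs : 0 <= s <= l) by (unfold s, l; lra).
  assert (Hap : d a (gm s) = s) by (rewrite <- G0; rewrite G2 by lra; rewrite Rabs_left1 by lra; lra).
  assert (Hpb : d (gm s) b = l - s) by (rewrite <- G1; rewrite G2 by lra; rewrite Rabs_left1 by lra; lra).
  assert (Hop : d o (gm s) <= gromov d o a b + 2 * Dl).
  { destruct (Gl gm l G2 s Hs (fun i => match i with 0%nat => a | 1%nat => o | _ => b end) 2 ltac:(lia))
      as [i [q [Hi [Hq1 Hq2]]]]; auto.
    pose proof (d_tri o q (gm s)). pose proof (d_tri a q (gm s)). pose proof (d_tri (gm s) q b).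
    rewrite (d_sym q (gm s)) in H2, H3.
    unfold gromov. rewrite (d_sym o a), (d_sym o b).
    destruct i as [|[|i]]; try lia; simpl in Hq1.
    - rewrite (d_sym q o) in Hq1. unfold s in *. lra.
    - rewrite (d_sym o b) in Hq1. unfold s, l in *. lra. }
  destruct (Gl gm l G2 s Hs (fun i => x (S i)) (n - 1) ltac:(lia)) as [i [q [Hi [Hq1 Hq2]]]]; auto.
  replace (S (n - 1)) with n by lia. auto.
  cbv beta in Hq1.
  pose proof (gromov_seg o _ _ q Hq1).
  pose proof (minfrom1_le (fun i => gromov d (x 0%nat) (x i) (x (S i))) (n - 2) (S i) ltac:(lia)).
  cbv beta in H3. fold o in H3.
  pose proof (d_tri o (gm s) q). lra.
Qed.

End Fwd.
Lemma forward : forall (X : Type) (d : X -> X -> R), is_metric d -> geodesic d -> quasi_tree d ->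
  exists A : R, 0 <= A /\
    forall (n : nat) (x : nat -> X), (2 <= n)%nat ->
      gromov d (x 0%nat) (x 1%nat) (x n) >=
        minfrom1 (fun i => gromov d (x 0%nat) (x i) (x (S i))) (n - 2) - A.
Proof.
  intros X d hmet hgeo [V [adj [Ht [f [L0 [C0 [HL [HC [Hq _]]]]]]]]].
  set (g := fun x => rnd V (proj1_sig (f x))).
  set (C := L0 * (C0 + 2) + C0 + 2).
  assert (Hup : forall x y, INR (D V adj (g x) (g y)) <= L0 * d x y + C).
  { intros. pose proof (rdist_round V adj Ht (f x) (f y)). destruct (Hq x y). unfold g, C.
    assert (0 <= L0 * (C0 + 2)) by nra. lra. }
  assert (Hlo : forall x y, d x y <= L0 * INR (D V adj (g x) (g y)) + C).
  { intros. pose proof (rdist_round V adj Ht (f x) (f y)). destruct (Hq x y). unfold g, C.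
    assert (d x y / L0 <= INR (D V adj (rnd V (proj1_sig (f x))) (rnd V (proj1_sig (f y)))) + 2 + C0) by lra.
    apply Rmult_le_compat_l with (r := L0) in H2; [|lra].
    replace (L0 * (d x y / L0)) with (d x y) in H2 by (field; lra). nra. }
  exists (3 * Dl L0 C). split.
  - pose proof (Dl_pos L0 C HL ltac:(unfold C; nra)). lra.
  - intros. apply (fwd_main X d hmet V adj Ht g L0 C HL ltac:(unfold C; nra) Hup Hlo hgeo); auto.
Qed.
Lemma fl_exists : forall r, 0 <= r -> exists k : nat, INR k <= r < INR k + 1.
Proof.
  intros r Hr. destruct (min_exists (fun n => r < INR n)) as [n [Hn Hmin]].
  destruct (INR_unbounded r) as [n Hn]. exists n; lra.
  destruct n. simpl in Hn. lra.
  exists n. rewrite S_INR in Hn. split; [|lra].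
  destruct (Rle_dec (INR n) r); auto. specialize (Hmin n ltac:(lra)). lia.
Qed.

Definition fl (r : R) : nat := epsilon (inhabits 0%nat) (fun k => INR k <= r < INR k + 1).

Lemma fl_spec : forall r, 0 <= r -> INR (fl r) <= r < INR (fl r) + 1.
Proof. intros. unfold fl. apply (epsilon_spec (inhabits 0%nat) (fun k => INR k <= r < INR k + 1)). apply fl_exists; auto. Qed.

Lemma fl_unique : forall r k, INR k <= r < INR k + 1 -> fl r = k.
Proof.
  intros r k Hk. assert (Hr : 0 <= r) by (pose proof (pos_INR k); lra).
  pose proof (fl_spec r Hr). destruct (lt_eq_lt_dec (fl r) k) as [[Hl|He]|Hl]; auto.
  - apply le_INR in Hl. rewrite S_INR in Hl. lra.
  - apply le_INR in Hl. rewrite S_INR in Hl. lra.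
Qed.

Lemma minfrom1_ge : forall f k t, (forall j, (1 <= j <= S k)%nat -> t <= f j) -> t <= minfrom1 f k.
Proof.
  induction k; intros t Hf; simpl. apply Hf; lia.
  apply Rmin_glb. apply IHk. intros; apply Hf; lia. apply Hf; lia.
Qed.

Section Rev.
Variables (X : Type) (d : X -> X -> R).
Hypothesis hmet : is_metric d.
Hypothesis hgeo : geodesic d.
Variable A : R.
Hypothesis HA : 0 <= A.
Hypothesis Hc : forall (n : nat) (x : nat -> X), (2 <= n)%nat ->
      gromov d (x 0%nat) (x 1%nat) (x n) >=
        minfrom1 (fun i => gromov d (x 0%nat) (x i) (x (S i))) (n - 2) - A.
Variable o : X.

Definition Rs := 2 * A + 1.
Lemma Rs_pos : 0 < Rs.
Proof. unfold Rs; lra. Qed.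
Definition th (k : nat) := INR k * Rs - A.
Definition G x y := gromov d o x y.

Lemma rd_sym : forall x y, d x y = d y x.
Proof. destruct hmet as [_ [H _]]; auto. Qed.
Lemma rd_tri : forall x y z, d x z <= d x y + d y z.
Proof. destruct hmet as [_ [_ H]]; auto. Qed.
Lemma rd_refl : forall x, d x x = 0.
Proof. destruct hmet as [H _]. intros; apply H; auto. Qed.
Lemma rd_pos : forall x y, 0 <= d x y.
Proof. intros. pose proof (rd_tri x y x). rewrite rd_refl, (rd_sym y x) in H. lra. Qed.

Lemma G_sym : forall x y, G x y = G y x.
Proof. intros. unfold G, gromov. rewrite (rd_sym x y). lra. Qed.
Lemma G_pos : forall x y, 0 <= G x y.
Proof. intros. unfold G, gromov. pose proof (rd_tri x o y). rewrite (rd_sym x o) in H. lra. Qed.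
Lemma G_le : forall x y, G x y <= d o x.
Proof. intros. unfold G, gromov. pose proof (rd_tri o x y). lra. Qed.
Lemma G_self : forall x, G x x = d o x.
Proof. intros. unfold G, gromov. rewrite rd_refl. lra. Qed.
Lemma G_geo : forall z x, d o z + d z x = d o x -> G z x = d o z.
Proof. intros. unfold G, gromov. lra. Qed.

Lemma chainG : forall n (z : nat -> X) t, (2 <= n)%nat ->
  (forall i, (1 <= i < n)%nat -> t <= G (z i) (z (S i))) -> t - A <= G (z 1%nat) (z n).
Proof.
  intros n z t Hn Hz.
  pose proof (Hc n (fun i => match i with 0%nat => o | _ => z i end) Hn). cbv beta in H.
  destruct n as [|n]. lia. unfold G.
  assert (t <= minfrom1 (fun i => gromov d o (match i with 0%nat => o | S _ => z i end)
             (match S i with 0%nat => o | S _ => z (S i) end)) (S n - 2)).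
  { apply minfrom1_ge. intros j Hj. destruct j. lia. apply Hz. lia. }
  lra.
Qed.

Definition lev x := fl (d o x / Rs).
Lemma lev_spec : forall x, INR (lev x) * Rs <= d o x < (INR (lev x) + 1) * Rs.
Proof.
  intros. pose proof Rs_pos. pose proof (fl_spec (d o x / Rs) ltac:(unfold Rdiv; apply Rmult_le_pos; [apply rd_pos | left; apply Rinv_0_lt_compat; lra])).
  unfold lev. destruct H0. split.
  - apply Rmult_le_reg_r with (/ Rs). apply Rinv_0_lt_compat; lra. rewrite Rmult_assoc, Rinv_r by lra. lra.
  - apply Rmult_lt_reg_r with (/ Rs). apply Rinv_0_lt_compat; lra. rewrite Rmult_assoc, Rinv_r by lra. lra.
Qed.
Lemma lev_unique : forall x k, INR k * Rs <= d o x < (INR k + 1) * Rs -> lev x = k.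
Proof.
  intros x k Hk. pose proof Rs_pos. unfold lev. apply fl_unique. split.
  - apply Rmult_le_reg_r with Rs; auto. unfold Rdiv. rewrite Rmult_assoc, Rinv_l by lra. lra.
  - apply Rmult_lt_reg_r with Rs; auto. unfold Rdiv. rewrite Rmult_assoc, Rinv_l by lra. lra.
Qed.

Definition E k x y := exists n (z : nat -> X), (1 <= n)%nat /\ z 1%nat = x /\ z n = y /\
  forall i, (1 <= i < n)%nat -> th k <= G (z i) (z (S i)).

Lemma E_refl : forall k x, E k x x.
Proof. intros. exists 1%nat, (fun _ => x). split; auto. split; auto. split; auto. intros; lia. Qed.
Lemma E_one : forall k x y, th k <= G x y -> E k x y.
Proof.
  intros. exists 2%nat, (fun i => match i with 1%nat => x | _ => y end). split; auto. split; auto. split; auto.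
  intros i Hi. assert (i = 1%nat) by lia. subst. auto.
Qed.
Lemma E_sym : forall k x y, E k x y -> E k y x.
Proof.
  intros k x y [n [z [Hn [H1 [H2 H3]]]]]. exists n, (fun i => z (n + 1 - i)%nat).
  split; auto. split. replace (n + 1 - 1)%nat with n by lia. auto. split. replace (n+1-n)%nat with 1%nat by lia. auto.
  intros i Hi. rewrite G_sym. replace (n + 1 - i)%nat with (S (n - i)) by lia.
  replace (n + 1 - S i)%nat with (n - i)%nat by lia. apply H3. lia.
Qed.
Lemma E_trans : forall k x y w, E k x y -> E k y w -> E k x w.
Proof.
  intros k x y w [n1 [z1 [Hn1 [H11 [H12 H13]]]]] [n2 [z2 [Hn2 [H21 [H22 H23]]]]].
  exists (n1 + n2 - 1)%nat, (fun i => if (i <=? n1)%nat then z1 i else z2 (i - n1 + 1)%nat).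
  split. lia. split. destruct (Nat.leb_spec 1 n1); [auto|lia]. split.
  - destruct (Nat.leb_spec (n1 + n2 - 1) n1). assert (n2 = 1%nat) by lia. subst n2. rewrite Nat.add_sub. congruence.
    rewrite <- H22. f_equal. lia.
  - intros i Hi. destruct (Nat.leb_spec i n1); destruct (Nat.leb_spec (S i) n1).
    + apply H13; lia.
    + assert (i = n1) by lia. subst i. rewrite H12, <- H21. replace (S n1 - n1 + 1)%nat with 2%nat by lia. apply H23; lia.
    + lia.
    + replace (S i - n1 + 1)%nat with (S (i - n1 + 1)) by lia. apply H23; lia.
Qed.

Lemma E_G : forall k x y, lev x = k -> E k x y -> th k - A <= G x y.
Proof.
  intros k x y Hl [n [z [Hn [H1 [H2 H3]]]]].
  destruct (Nat.eq_dec n 1). subst n. rewrite H1 in H2. subst y. rewrite G_self.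
  pose proof (lev_spec x). rewrite Hl in H. unfold th. lra.
  subst. apply chainG; auto. lia.
Qed.
Definition cls k x : X -> Prop := fun y => lev y = k /\ E k x y.
Definition isV (p : nat * (X -> Prop)) := exists x, lev x = fst p /\ snd p = cls (fst p) x.
Definition Vt := { p : nat * (X -> Prop) | isV p }.
Definition vert (x : X) : Vt := exist isV (lev x, cls (lev x) x) (ex_intro _ x (conj eq_refl eq_refl)).
Definition levV (U : Vt) := fst (proj1_sig U).

Lemma vert_surj : forall U : Vt, exists x, vert x = U.
Proof.
  intros [[k P] [x [H1 H2]]]. simpl in *. exists x. unfold vert. apply subset_eq_compat. subst. auto.
Qed.

Lemma vert_eq1 : forall x y, vert x = vert y -> lev x = lev y /\ E (lev x) x y.
Proof.
  intros x y H. apply EqdepFacts.eq_sig_fst in H. injection H as H1 H2.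
  split; auto. assert (cls (lev x) x y). rewrite H2. split; auto. apply E_refl.
  destruct H; auto.
Qed.

Lemma vert_eq2 : forall x y, lev x = lev y -> E (lev x) x y -> vert x = vert y.
Proof.
  intros x y H1 H2. unfold vert. apply subset_eq_compat. rewrite <- H1. f_equal.
  apply functional_extensionality. intros z. apply propositional_extensionality. unfold cls. split.
  - intros [Hz Hz2]. split; auto. eapply E_trans. apply E_sym. eauto. auto.
  - intros [Hz Hz2]. split; auto. eapply E_trans; eauto.
Qed.

Definition parentOf (U W : Vt) := exists x z, vert x = U /\ vert z = W /\ d o z + d z x = d o x /\ lev x = S (lev z).
Definition adjV (U W : Vt) := parentOf U W \/ parentOf W U.

Lemma parent_lev : forall U W, parentOf U W -> levV U = S (levV W).
Proof. intros U W [x [z [<- [<- [_ H]]]]]. unfold levV. simpl. auto. Qed.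

Lemma geo_point : forall x t, 0 <= t <= d o x -> exists z, d o z = t /\ d o z + d z x = d o x.
Proof.
  intros x t Ht. destruct (hgeo o x) as [gm [G0 [G1 G2]]].
  exists (gm t).
  assert (E1 : d (gm 0) (gm t) = t) by (rewrite G2 by lra; rewrite Rabs_left1 by lra; lra).
  assert (E2 : d (gm t) (gm (d o x)) = d o x - t) by (rewrite G2 by lra; rewrite Rabs_left1 by lra; lra).
  rewrite G0 in E1. rewrite G1 in E2. split; lra.
Qed.

Lemma parent_exists : forall x, (1 <= lev x)%nat -> exists z, d o z + d z x = d o x /\ lev x = S (lev z).
Proof.
  intros x Hx. pose proof (lev_spec x). pose proof Rs_pos.
  assert (E1 : INR (lev x) = INR (lev x - 1) + 1) by (rewrite <- S_INR; f_equal; lia).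
  destruct (geo_point x (INR (lev x - 1) * Rs)) as [z [Hz1 Hz2]].
  { split. apply Rmult_le_pos; [apply pos_INR|lra]. nra. }
  exists z. split; auto. assert (lev z = (lev x - 1)%nat). apply lev_unique. rewrite Hz1. nra. lia.
Qed.

Lemma parent_unique : forall U W1 W2, parentOf U W1 -> parentOf U W2 -> W1 = W2.
Proof.
  intros U W1 W2 [x1 [z1 [Hx1 [Hz1 [Hg1 Hl1]]]]] [x2 [z2 [Hx2 [Hz2 [Hg2 Hl2]]]]].
  subst. symmetry in Hx2. apply vert_eq1 in Hx2. destruct Hx2 as [Hl HE].
  apply E_G in HE; auto.
  assert (Lz : lev z1 = lev z2) by lia.
  pose proof (lev_spec z1). pose proof (lev_spec z2). pose proof Rs_pos.
  set (k := lev z1) in *.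
  assert (Gz : INR k * Rs - A <= G z1 z2).
  { apply (chainG 4 (fun i => match i with 1%nat => z1 | 2%nat => x1 | 3%nat => x2 | _ => z2 end)). lia. intros i Hi.
    destruct i as [|[|[|[|i]]]]; try lia; simpl.
    - rewrite (G_geo z1 x1 Hg1). lra.
    - unfold th in HE. rewrite Hl1 in HE. rewrite S_INR in HE. fold k in HE. unfold Rs in *. lra.
    - rewrite G_sym, (G_geo z2 x2 Hg2). rewrite <- Lz in H0. lra. }
  apply vert_eq2; auto. apply E_one. unfold th. fold k. auto.
Qed.

Lemma adjV_lev : forall U W, adjV U W -> levV U = S (levV W) \/ levV W = S (levV U).
Proof. intros U W [H|H]; apply parent_lev in H; auto. Qed.

Lemma lev_o : lev o = 0%nat.
Proof. apply lev_unique. rewrite rd_refl. simpl. pose proof Rs_pos. lra. Qed.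

Lemma to_root : forall k x, lev x = k -> walk adjV k (vert x) (vert o).
Proof.
  induction k; intros x Hx.
  - replace (vert x) with (vert o). constructor. apply vert_eq2. rewrite lev_o; auto.
    rewrite lev_o. apply E_one. unfold th. simpl. pose proof (G_pos o x). lra.
  - destruct (parent_exists x ltac:(lia)) as [z [Hz1 Hz2]].
    apply (walkS _ _ _ (vert z)). left. exists x, z. auto. apply IHk. lia.
Qed.

Lemma argmax : forall (f : nat -> nat) N, (1 <= N)%nat -> exists i, (i < N)%nat /\ forall j, (j < N)%nat -> (f j <= f i)%nat.
Proof.
  intros f N HN. induction N. lia.
  destruct (Nat.eq_dec N 0). subst. exists 0%nat. split. lia. intros; assert (j = 0%nat) by lia; subst; lia.
  destruct IHN as [i [Hi Hm]]. lia.
  destruct (le_lt_dec (f N) (f i)).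
  - exists i. split. lia. intros j Hj. destruct (Nat.eq_dec j N). subst; auto. apply Hm; lia.
  - exists N. split. lia. intros j Hj. destruct (Nat.eq_dec j N). subst; auto. specialize (Hm j ltac:(lia)). lia.
Qed.

Lemma tree_V : is_tree adjV.
Proof.
  split; [|split; [|split]].
  - intros U W [H|H]; [right|left]; auto.
  - intros U H. apply adjV_lev in H. lia.
  - intros U W. destruct (vert_surj U) as [x <-]. destruct (vert_surj W) as [y <-].
    exists (lev x + lev y)%nat. eapply walk_app. apply to_root; auto.
    apply walk_rev. intros ? ? [H|H]; [right|left]; auto. apply to_root; auto.
  - intros [l [v0 [Hl [Hnd [Hadj Hlast]]]]].
    assert (Hlast' : adjV (nth (length l - 1) l v0) (nth 0 l v0)).
    { rewrite <- (last_nth Vt l v0). destruct l. simpl in Hl. lia. exact Hlast.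
      intro E0; subst l; simpl in Hl; lia. }
    set (N := length l) in *.
    destruct (argmax (fun i => levV (nth i l v0)) N ltac:(lia)) as [i [Hi Hm]].
    set (ip := if (i =? 0)%nat then (N - 1)%nat else (i - 1)%nat).
    set (inx := if (i =? N - 1)%nat then 0%nat else S i).
    assert (Hp : adjV (nth ip l v0) (nth i l v0)).
    { unfold ip. destruct (Nat.eqb_spec i 0). subst; auto. replace i with (S (i - 1)) at 2 by lia. apply Hadj. lia. }
    assert (Hn : adjV (nth i l v0) (nth inx l v0)).
    { unfold inx. destruct (Nat.eqb_spec i (N - 1)). subst; auto. apply Hadj. lia. }
    assert (Hip : (ip < N)%nat) by (unfold ip; destruct (Nat.eqb_spec i 0); lia).
    assert (Hinx : (inx < N)%nat) by (unfold inx; destruct (Nat.eqb_spec i (N-1)); lia).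
    assert (P1 : parentOf (nth i l v0) (nth ip l v0)).
    { destruct Hp as [Hp|Hp]; auto. apply parent_lev in Hp. specialize (Hm ip Hip). cbv beta in Hm. lia. }
    assert (P2 : parentOf (nth i l v0) (nth inx l v0)).
    { destruct Hn as [Hn|Hn]; auto. apply parent_lev in Hn. specialize (Hm inx Hinx). cbv beta in Hm. lia. }
    pose proof (parent_unique _ _ _ P1 P2).
    apply (proj1 (NoDup_nth l v0)) in H; auto.
    unfold ip, inx in H. destruct (Nat.eqb_spec i 0); destruct (Nat.eqb_spec i (N - 1)); lia.
Qed.
Lemma anc_walk : forall x j, (j <= lev x)%nat -> exists a, lev a = j /\ d o a = INR j * Rs /\
  d o a + d a x = d o x /\ walk adjV (lev x - j) (vert x) (vert a).
Proof.
  intros x j Hj. destruct (hgeo o x) as [gm [G0 [G1 G2]]].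
  pose proof (lev_spec x). pose proof Rs_pos.
  set (a := fun i : nat => gm (INR i * Rs)).
  assert (Hr : forall i, (i <= lev x)%nat -> 0 <= INR i * Rs <= d o x).
  { intros i Hi. split. apply Rmult_le_pos; [apply pos_INR|lra].
    apply le_INR in Hi. nra. }
  assert (Ha1 : forall i, (i <= lev x)%nat -> d o (a i) = INR i * Rs).
  { intros i Hi. specialize (Hr i Hi). rewrite <- G0 at 1. unfold a. rewrite G2 by lra. rewrite Rabs_left1 by lra. lra. }
  assert (Ha2 : forall i, (i <= lev x)%nat -> d o (a i) + d (a i) x = d o x).
  { intros i Hi. specialize (Hr i Hi). rewrite Ha1 by auto. pattern x at 1. rewrite <- G1. unfold a. rewrite G2 by lra.
    rewrite Rabs_left1; lra. }
  assert (Ha3 : forall i, (i <= lev x)%nat -> lev (a i) = i).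
  { intros i Hi. apply lev_unique. rewrite Ha1 by auto. lra. }
  assert (Ha4 : forall i, (S i <= lev x)%nat -> parentOf (vert (a (S i))) (vert (a i))).
  { intros i Hi. exists (a (S i)), (a i). split; auto. split; auto. split.
    - rewrite !Ha1 by lia. unfold a. rewrite G2 by (apply Hr; lia). rewrite !S_INR.
      rewrite Rabs_left1; lra.
    - rewrite !Ha3 by lia. auto. }
  assert (Hvx : vert (a (lev x)) = vert x).
  { apply vert_eq2. apply Ha3; auto. rewrite Ha3 by auto. apply E_one. unfold th.
    rewrite G_geo by (apply Ha2; auto). rewrite Ha1 by auto. lra. }
  exists (a j). split. apply Ha3; auto. split. apply Ha1; auto. split. apply Ha2; auto.
  set (f := fun i => vert (a (lev x - i)%nat)).
  assert (W := fn_walk0 Vt adjV f (lev x - j)).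
  unfold f in W. rewrite Nat.sub_0_r in W. replace (lev x - (lev x - j))%nat with j in W by lia.
  rewrite Hvx in W. apply W. intros i Hi. left. replace (lev x - i)%nat with (S (lev x - S i)) by lia. apply Ha4. lia.
Qed.

Lemma adjV_sym : forall U W, adjV U W -> adjV W U.
Proof. intros U W [H|H]; [right|left]; auto. Qed.

Lemma upper_D : forall x y, INR (D Vt adjV (vert x) (vert y)) <= d x y / Rs + 2.
Proof.
  intros x y. pose proof Rs_pos.
  set (j := fl (G x y / Rs)).
  assert (Hj : INR j <= G x y / Rs < INR j + 1).
  { apply fl_spec. unfold Rdiv. apply Rmult_le_pos. apply G_pos. left; apply Rinv_0_lt_compat; lra. }
  assert (Hj' : INR j * Rs <= G x y < (INR j + 1) * Rs).
  { destruct Hj. split.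
    - apply Rmult_le_reg_r with (/ Rs). apply Rinv_0_lt_compat; lra. rewrite Rmult_assoc, Rinv_r by lra. lra.
    - apply Rmult_lt_reg_r with (/ Rs). apply Rinv_0_lt_compat; lra. rewrite Rmult_assoc, Rinv_r by lra. lra. }
  pose proof (G_le x y). pose proof (G_le y x). rewrite G_sym in H1.
  pose proof (lev_spec x). pose proof (lev_spec y).
  assert (Jx : (j <= lev x)%nat). { apply INR_lt in H4 || idtac. assert (INR j < INR (lev x) + 1) by nra. rewrite <- S_INR in H4. apply INR_lt in H4. lia. }
  assert (Jy : (j <= lev y)%nat). { assert (INR j < INR (lev y) + 1) by nra. rewrite <- S_INR in H4. apply INR_lt in H4. lia. }
  destruct (anc_walk x j Jx) as [ax [Lx [Dx [Gx Wx]]]].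
  destruct (anc_walk y j Jy) as [ay [Ly [Dy [Gy Wy]]]].
  assert (Vxy : vert ax = vert ay).
  { apply vert_eq2. congruence. rewrite Lx. apply E_one. unfold th.
    apply (chainG 4 (fun i => match i with 1%nat => ax | 2%nat => x | 3%nat => y | _ => ay end)). lia.
    intros i Hi. destruct i as [|[|[|[|i]]]]; try lia; simpl.
    - rewrite G_geo by auto. lra.
    - lra.
    - rewrite G_sym, G_geo by auto. lra. }
  rewrite Vxy in Wx.
  assert (W := walk_app Vt adjV _ _ _ Wx _ _ (walk_rev Vt adjV adjV_sym _ _ _ Wy)).
  apply (Dmin Vt adjV tree_V) in W.
  apply le_INR in W. rewrite plus_INR, !minus_INR in W by lia.
  assert (Rs * (INR (lev x) + INR (lev y) - 2 * INR j) <= d x y + 2 * Rs).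
  { unfold G, gromov in Hj'. nra. }
  assert (INR (lev x) - INR j + (INR (lev y) - INR j) <= d x y / Rs + 2).
  { apply Rmult_le_reg_l with Rs; auto. replace (Rs * (d x y / Rs + 2)) with (d x y + 2 * Rs) by (field; lra). lra. }
  lra.
Qed.

Definition K0 := 2 * Rs + 4 * A.
Definition Kd := 2 * K0 + 2 * Rs.

Lemma same_vert : forall x y, vert x = vert y -> d x y <= K0.
Proof.
  intros x y H. apply vert_eq1 in H. destruct H as [Hl HE]. apply E_G in HE; auto.
  pose proof (lev_spec x). pose proof (lev_spec y). rewrite <- Hl in H0.
  unfold th, G, gromov, K0 in *. lra.
Qed.

Lemma par_close : forall x1 z1, d o z1 + d z1 x1 = d o x1 -> lev x1 = S (lev z1) -> d z1 x1 <= 2 * Rs.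
Proof.
  intros. pose proof (lev_spec x1). pose proof (lev_spec z1). rewrite H0, S_INR in H1. lra.
Qed.

Lemma adj_close : forall U W x y, adjV U W -> vert x = U -> vert y = W -> d x y <= Kd.
Proof.
  intros U W x y [[x1 [z1 [H1 [H2 [H3 H4]]]]]|[x1 [z1 [H1 [H2 [H3 H4]]]]]] Hx Hy; subst.
  - pose proof (par_close _ _ H3 H4). pose proof (same_vert x x1 ltac:(congruence)).
    pose proof (same_vert z1 y ltac:(congruence)). pose proof (rd_tri x x1 y). pose proof (rd_tri x1 z1 y).
    rewrite (rd_sym x1 z1) in H5. unfold Kd. lra.
  - pose proof (par_close _ _ H3 H4). pose proof (same_vert x z1 ltac:(congruence)).
    pose proof (same_vert x1 y ltac:(congruence)). pose proof (rd_tri x z1 y). pose proof (rd_tri z1 x1 y).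
    unfold Kd. lra.
Qed.

Lemma lower_D : forall m U W, walk adjV m U W -> forall x y, vert x = U -> vert y = W -> d x y <= Kd * INR m + K0.
Proof.
  induction 1; intros x y Hx Hy.
  - simpl. rewrite Rmult_0_r, Rplus_0_l. apply same_vert. congruence.
  - destruct (vert_surj w) as [z Hz]. pose proof (adj_close u w x z H Hx Hz).
    pose proof (IHwalk z y Hz Hy). pose proof (rd_tri x z y). rewrite S_INR. lra.
Qed.

Definition fv (x : X) : rpoint adjV := exist (rvalid adjV) (RVert (vert x)) I.

Lemma rdist_fv : forall x y, rdist adjV (fv x) (fv y) = INR (gdist adjV (vert x) (vert y)).
Proof. intros. unfold rdist, rdist0, fv. simpl. ring. Qed.

Lemma reverse_main : quasi_tree d.
Proof.
  exists Vt, adjV. split. apply tree_V.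
  pose proof Rs_pos. assert (HK0 : 0 <= K0) by (unfold K0; lra). assert (HKd : 0 <= Kd) by (unfold Kd; lra).
  assert (Hi : 0 < / Rs) by (apply Rinv_0_lt_compat; lra).
  exists fv, (1 + Kd + / Rs), (3 + K0). split. lra. split. lra. split.
  - intros x y. rewrite rdist_fv. pose proof (upper_D x y). unfold D in H0. pose proof (rd_pos x y).
    set (g0 := INR (gdist adjV (vert x) (vert y))) in *. assert (0 <= g0) by apply pos_INR. split.
    + pose proof (lower_D _ _ _ (Dwalk Vt adjV tree_V (vert x) (vert y)) x y eq_refl eq_refl). unfold D in H3. fold g0 in H3.
      assert (d x y <= (1 + Kd + / Rs) * (g0 + (3 + K0))) by nra.
      assert (d x y / (1 + Kd + / Rs) <= g0 + (3 + K0)).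
      { apply Rmult_le_reg_r with (1 + Kd + / Rs). lra. unfold Rdiv. rewrite Rmult_assoc, Rinv_l by lra. lra. }
      lra.
    + unfold Rdiv in H0. nra.
  - intros [p Hp]. destruct p as [U|U W t].
    + destruct (vert_surj U) as [x <-]. exists x. unfold rdist, rdist0, fv. simpl.
      pose proof (D_refl Vt adjV tree_V (vert x)). unfold D in H0. rewrite H0. simpl. lra.
    + destruct (vert_surj U) as [x <-]. exists x. unfold rdist, rdist0, fv. simpl. simpl in Hp.
      pose proof (D_refl Vt adjV tree_V (vert x)). unfold D in H0. rewrite H0. simpl.
      eapply Rle_trans. apply Rmin_r. lra.
Qed.

End Rev.

Lemma reverse : forall (X : Type) (d : X -> X -> R), is_metric d -> geodesic d ->
  (exists A : R, 0 <= A /\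
    forall (n : nat) (x : nat -> X), (2 <= n)%nat ->
      gromov d (x 0%nat) (x 1%nat) (x n) >=
        minfrom1 (fun i => gromov d (x 0%nat) (x i) (x (S i))) (n - 2) - A) -> quasi_tree d.
Proof.
  intros X d hmet hgeo [A [HA Hc]].
  destruct (classic (exists o : X, True)) as [[o _]|Hn].
  - apply (reverse_main X d hmet hgeo A HA Hc o).
  - exists Empty_set, (fun _ _ => False). split.
    + split; [|split; [|split]]; auto. intros u; destruct u. intros [l [v0 _]]; destruct v0.
    + exists (fun x : X => False_rect (rpoint (fun _ _ : Empty_set => False)) (Hn (ex_intro _ x I))), 1, 0.
      split. lra. split. lra. split. intros x; exfalso; eauto.
      intros [[u|u v t] Hp]; exfalso; destruct u.
Qed.

Theorem proposition4p1 (X : Type) (d : X -> X -> R)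
  (hmet : is_metric d) (hgeo : geodesic d) :
  quasi_tree d <->
  exists A : R, 0 <= A /\
    forall (n : nat) (x : nat -> X), (2 <= n)%nat ->
      gromov d (x 0%nat) (x 1%nat) (x n) >=
        minfrom1 (fun i => gromov d (x 0%nat) (x i) (x (S i))) (n - 2) - A.
Proof.
  split.
  - apply forward; auto.
  - apply reverse; auto.
Qed.
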